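(* Let $\mathcal{C}$ be a category with finite products and an exponentiable parametrised natural numbers object $N$. (1) Every iterative midpoint object $(A,m)$ is a supermidpoint object under its associated infinitary operation $M$ (the unique $M\colon A^N\to A$ with $M_i\,x_i=m(x_0,M_i\,x_{i+1})$), and if $(A,m)$ is cancellative then so is this supermidpoint object. (2) Every cancellative supermidpoint object $(A,M)$ is an m-convex body under its associated binary operation $m(x,y)=M(x,y,y,y,\dots)$.
   Context: Equations are between generalised elements; $M_i\,x_i$ denotes $M((x_i))$. A midpoint object is $(A,m)$ with $m\colon A\times A\to A$ satisfying $m(x,x)=x$, $m(x,y)=m(y,x)$, $m(m(x,y),m(z,w))=m(m(x,z),m(y,w))$; it is cancellative if $m(x,y)=m(x,z)$ implies $y=z$; it is iterative if for every map $c\colon X\to A\times X$ there is a unique $u\colon X\to A$ with $m\circ(\mathrm{id}\times u)\circ c=u$. An m-convex body is a cancellative iterative midpoint object. A supermidpoint object is an object $A$ with $M\colon A^N\to A$ satisfying: $M(x,x,x,\dots)=x$; $M(x,y,y,y,\dots)=M(y,x,x,x,\dots)$; $M_i M_j\,x_{ij}=M_j M_i\,x_{ij}$; and $M_i\,x_i=M(x_0, M_i x_{i+1}, M_i x_{i+1},\dots)$. It is cancellative if the binary operation $m(x,y)=M(x,y,y,y,\dots)$ satisfies cancellation. *)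

(* Defs.v *)
Set Implicit Arguments.

Record CatPN := {
  Ob : Type;
  Hom : Ob -> Ob -> Type;
  idm : forall A, Hom A A;
  cmp : forall A B C, Hom B C -> Hom A B -> Hom A C;
  cmp_idl : forall A B (f : Hom A B), cmp (idm B) f = f;
  cmp_idr : forall A B (f : Hom A B), cmp f (idm A) = f;
  cmp_assoc : forall A B C D (h : Hom C D) (g : Hom B C) (f : Hom A B),
      cmp h (cmp g f) = cmp (cmp h g) f;
  term : Ob;
  bang : forall A, Hom A term;
  bang_uniq : forall A (f : Hom A term), f = bang A;
  prod : Ob -> Ob -> Ob;
  pr1 : forall A B, Hom (prod A B) A;
  pr2 : forall A B, Hom (prod A B) B;
  pair : forall X A B, Hom X A -> Hom X B -> Hom X (prod A B);
  pair_pr1 : forall X A B (f : Hom X A) (g : Hom X B), cmp (pr1 A B) (pair f g) = f;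
  pair_pr2 : forall X A B (f : Hom X A) (g : Hom X B), cmp (pr2 A B) (pair f g) = g;
  pair_uniq : forall X A B (h : Hom X (prod A B)),
      h = pair (cmp (pr1 A B) h) (cmp (pr2 A B) h);
  nno : Ob;
  zero : Hom term nno;
  succ : Hom nno nno;
  nrec : forall X Y, Hom X Y -> Hom Y Y -> Hom (prod X nno) Y;
  nrec_zero : forall X Y (f : Hom X Y) (g : Hom Y Y),
      cmp (nrec f g) (pair (idm X) (cmp zero (bang X))) = f;
  nrec_succ : forall X Y (f : Hom X Y) (g : Hom Y Y),
      cmp (nrec f g) (pair (pr1 X nno) (cmp succ (pr2 X nno))) = cmp g (nrec f g);
  nrec_uniq : forall X Y (f : Hom X Y) (g : Hom Y Y) (h : Hom (prod X nno) Y),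
      cmp h (pair (idm X) (cmp zero (bang X))) = f ->
      cmp h (pair (pr1 X nno) (cmp succ (pr2 X nno))) = cmp g h ->
      h = nrec f g;
  expN : Ob -> Ob;
  ev : forall A, Hom (prod (expN A) nno) A;
  lam : forall X A, Hom (prod X nno) A -> Hom X (expN A);
  lam_beta : forall X A (f : Hom (prod X nno) A),
      cmp (ev A) (pair (cmp (lam f) (pr1 X nno)) (pr2 X nno)) = f;
  lam_uniq : forall X A (f : Hom (prod X nno) A) (g : Hom X (expN A)),
      cmp (ev A) (pair (cmp g (pr1 X nno)) (pr2 X nno)) = f -> g = lam f
}.

Arguments idm {c} A.
Arguments cmp {c A B C} _ _.
Arguments term {c}.
Arguments bang {c} A.
Arguments prod {c} _ _.
Arguments pr1 {c A B}.
Arguments pr2 {c A B}.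
Arguments pair {c X A B} _ _.
Arguments nno {c}.
Arguments zero {c}.
Arguments succ {c}.
Arguments nrec {c X Y} _ _.
Arguments expN {c} _.
Arguments ev {c A}.
Arguments lam {c X A} _.

Section Derived.
Variable C : CatPN.
Local Notation Hom := (Hom C).

(* Generalised-element conventions: an element x : Hom X A ; a sequence
   (x_i)_i of generalised elements at stage X is a map Hom (prod X nno) A. *)

Definition app2 {X A : Ob C} (m : Hom (prod A A) A) (x y : Hom X A) : Hom X A :=
  cmp m (pair x y).

Definition Mapp {X A : Ob C} (M : Hom (expN A) A) (x : Hom (prod X nno) A) : Hom X A :=
  cmp M (lam x).

Definition at0 {X A : Ob C} (x : Hom (prod X nno) A) : Hom X A :=
  cmp x (pair (idm X) (cmp zero (bang X))).

Definition shift {X A : Ob C} (x : Hom (prod X nno) A) : Hom (prod X nno) A :=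
  cmp x (pair pr1 (cmp succ pr2)).

Definition constseq {X A : Ob C} (x : Hom X A) : Hom (prod X nno) A :=
  cmp x pr1.

(* the sequence (a, b, b, b, ...), defined by recursion on N with values in A*A *)
Definition seqab {X A : Ob C} (a b : Hom X A) : Hom (prod X nno) A :=
  cmp pr1 (nrec (pair a b) (pair (@pr2 C A A) (@pr2 C A A))).

Definition swapN {X : Ob C} : Hom (prod (prod X nno) nno) (prod (prod X nno) nno) :=
  pair (pair (cmp pr1 pr1) pr2) (cmp pr2 pr1).

Definition is_midpoint {A : Ob C} (m : Hom (prod A A) A) : Prop :=
  (forall X (x : Hom X A), app2 m x x = x) /\
  (forall X (x y : Hom X A), app2 m x y = app2 m y x) /\
  (forall X (x y z w : Hom X A),
      app2 m (app2 m x y) (app2 m z w) = app2 m (app2 m x z) (app2 m y w)).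

Definition mcancellative {A : Ob C} (m : Hom (prod A A) A) : Prop :=
  forall X (x y z : Hom X A), app2 m x y = app2 m x z -> y = z.

Definition iterative {A : Ob C} (m : Hom (prod A A) A) : Prop :=
  forall X (c : Hom X (prod A X)),
    exists u : Hom X A,
      cmp m (cmp (pair pr1 (cmp u pr2)) c) = u /\
      forall v : Hom X A, cmp m (cmp (pair pr1 (cmp v pr2)) c) = v -> v = u.

Definition mconvex_body {A : Ob C} (m : Hom (prod A A) A) : Prop :=
  is_midpoint m /\ mcancellative m /\ iterative m.

Definition is_supermidpoint {A : Ob C} (M : Hom (expN A) A) : Prop :=
  (forall X (x : Hom X A), Mapp M (constseq x) = x) /\
  (forall X (x y : Hom X A), Mapp M (seqab x y) = Mapp M (seqab y x)) /\
  (forall X (x : Hom (prod (prod X nno) nno) A),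
      Mapp M (Mapp M x) = Mapp M (Mapp M (cmp x swapN))) /\
  (forall X (x : Hom (prod X nno) A),
      Mapp M x = Mapp M (seqab (at0 x) (Mapp M (shift x)))).

Definition binop_of {A : Ob C} (M : Hom (expN A) A) : Hom (prod A A) A :=
  Mapp M (seqab pr1 pr2).

Definition super_cancellative {A : Ob C} (M : Hom (expN A) A) : Prop :=
  mcancellative (binop_of M).

Definition assoc_infop {A : Ob C} (m : Hom (prod A A) A) (M : Hom (expN A) A) : Prop :=
  forall X (x : Hom (prod X nno) A), Mapp M x = app2 m (at0 x) (Mapp M (shift x)).

End Derived.

Arguments app2 {C X A}.
Arguments Mapp {C X A}.
Arguments at0 {C X A}.
Arguments shift {C X A}.
Arguments constseq {C X A}.
Arguments seqab {C X A}.
Arguments swapN {C X}.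
Arguments is_midpoint {C A}.
Arguments mcancellative {C A}.
Arguments iterative {C A}.
Arguments mconvex_body {C A}.
Arguments is_supermidpoint {C A}.
Arguments binop_of {C A}.
Arguments super_cancellative {C A}.
Arguments assoc_infop {C A}.

(* Main.v *)
From Stdlib Require Import Setoid.
Require Import Defs.
Set Implicit Arguments.

Lemma cmpA {C : CatPN} {A B D E : Ob C} (h : Hom C D E) (g : Hom C B D) (f : Hom C A B) :
  cmp (cmp h g) f = cmp h (cmp g f).
Proof. symmetry; apply cmp_assoc. Qed.

Lemma pair_cmp {C : CatPN} {Y X A B : Ob C} (f : Hom C X A) (g : Hom C X B) (h : Hom C Y X) :
  cmp (pair f g) h = pair (cmp f h) (cmp g h).
Proof.
  rewrite (@pair_uniq _ _ _ _ (cmp (pair f g) h)).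
  rewrite !cmp_assoc, pair_pr1, pair_pr2. reflexivity.
Qed.

Lemma pr1_pair_cmp {C : CatPN} {Y X A B : Ob C} (f : Hom C X A) (g : Hom C X B) (h : Hom C Y X) :
  cmp pr1 (cmp (pair f g) h) = cmp f h.
Proof. rewrite cmp_assoc, pair_pr1. reflexivity. Qed.

Lemma pr2_pair_cmp {C : CatPN} {Y X A B : Ob C} (f : Hom C X A) (g : Hom C X B) (h : Hom C Y X) :
  cmp pr2 (cmp (pair f g) h) = cmp g h.
Proof. rewrite cmp_assoc, pair_pr2. reflexivity. Qed.

Lemma bang_cmp {C : CatPN} {X Y : Ob C} (f : Hom C Y X) : cmp (bang X) f = bang Y.
Proof. apply bang_uniq. Qed.

Lemma pair_eta {C : CatPN} {A B : Ob C} : pair (@pr1 C A B) pr2 = idm (prod A B).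
Proof. rewrite (@pair_uniq _ _ _ _ (idm (prod A B))), !cmp_idr. reflexivity. Qed.

Lemma pair_proj {C : CatPN} {X A B : Ob C} (h : Hom C X (prod A B)) :
  pair (cmp pr1 h) (cmp pr2 h) = h.
Proof. symmetry; apply pair_uniq. Qed.

Ltac norm := repeat progress rewrite ?cmpA, ?pair_cmp, ?pr1_pair_cmp, ?pr2_pair_cmp,
   ?pair_pr1, ?pair_pr2, ?cmp_idl, ?cmp_idr, ?bang_cmp, ?pair_eta.

Lemma lam_nat {C : CatPN} {X Y A : Ob C} (x : Hom C (prod X nno) A) (f : Hom C Y X) :
  cmp (lam x) f = lam (cmp x (pair (cmp f pr1) pr2)).
Proof.
  apply lam_uniq.
  transitivity (cmp (cmp ev (pair (cmp (lam x) pr1) pr2)) (pair (cmp f pr1) pr2)).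
  - norm. reflexivity.
  - rewrite lam_beta. reflexivity.
Qed.

Lemma Mapp_nat {C : CatPN} {X Y A : Ob C} (M : Hom C (expN A) A) (x : Hom C (prod X nno) A) (f : Hom C Y X) :
  cmp (Mapp M x) f = Mapp M (cmp x (pair (cmp f pr1) pr2)).
Proof. unfold Mapp. rewrite cmpA, lam_nat. reflexivity. Qed.

Lemma lam_ev {C : CatPN} {X A : Ob C} (t : Hom C X (expN A)) :
  lam (cmp ev (pair (cmp t pr1) pr2)) = t.
Proof. symmetry; apply lam_uniq; reflexivity. Qed.

Lemma seqab_at0 {C : CatPN} {X A : Ob C} (a b : Hom C X A) :
  cmp (seqab a b) (pair (idm X) (cmp zero (bang X))) = a.
Proof. unfold seqab. rewrite cmpA, nrec_zero, pair_pr1. reflexivity. Qed.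

Lemma seqab_pr2 {C : CatPN} {X A : Ob C} (a b : Hom C X A) :
  cmp pr2 (nrec (pair a b) (pair (@pr2 C A A) (@pr2 C A A))) = cmp b pr1.
Proof.
  transitivity (nrec b (idm A)).
  - apply nrec_uniq.
    + rewrite cmpA, nrec_zero, pair_pr2. reflexivity.
    + rewrite cmpA, nrec_succ, <- cmpA, pair_pr2, cmp_idl. reflexivity.
  - symmetry. apply nrec_uniq.
    + norm. reflexivity.
    + norm. reflexivity.
Qed.

Lemma seqab_sh {C : CatPN} {X A : Ob C} (a b : Hom C X A) :
  cmp (seqab a b) (pair pr1 (cmp succ pr2)) = cmp b pr1.
Proof.
  unfold seqab. rewrite cmpA, nrec_succ, <- cmpA, pair_pr1, seqab_pr2. reflexivity.
Qed.

Lemma seqab_uniq {C : CatPN} {X A : Ob C} (a b : Hom C X A) (s : Hom C (prod X nno) A) :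
  cmp s (pair (idm X) (cmp zero (bang X))) = a ->
  cmp s (pair pr1 (cmp succ pr2)) = cmp b pr1 -> s = seqab a b.
Proof.
  intros H0 H1. unfold seqab.
  rewrite <- (@nrec_uniq _ _ _ (pair a b) (pair (@pr2 C A A) (@pr2 C A A)) (pair s (cmp b pr1))).
  - rewrite pair_pr1. reflexivity.
  - rewrite pair_cmp, H0. norm. reflexivity.
  - rewrite pair_cmp, H1. norm. reflexivity.
Qed.

Lemma seqab_nat {C : CatPN} {X Y A : Ob C} (a b : Hom C X A) (f : Hom C Y X) :
  cmp (seqab a b) (pair (cmp f pr1) pr2) = seqab (cmp a f) (cmp b f).
Proof.
  apply seqab_uniq.
  - transitivity (cmp (cmp (seqab a b) (pair (idm X) (cmp zero (bang X)))) f).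
    + norm. reflexivity.
    + rewrite seqab_at0. reflexivity.
  - transitivity (cmp (cmp (seqab a b) (pair pr1 (cmp succ pr2))) (pair (cmp f pr1) pr2)).
    + norm. reflexivity.
    + rewrite seqab_sh. norm. reflexivity.
Qed.

Lemma seqab_post {C : CatPN} {X A B : Ob C} (a b : Hom C X A) (g : Hom C A B) :
  cmp g (seqab a b) = seqab (cmp g a) (cmp g b).
Proof.
  apply seqab_uniq.
  - rewrite cmpA, seqab_at0. reflexivity.
  - rewrite cmpA, seqab_sh, cmpA. reflexivity.
Qed.

Lemma seqab_pair {C : CatPN} {X A B : Ob C} (a c : Hom C X A) (b d : Hom C X B) :
  pair (seqab a c) (seqab b d) = seqab (pair a b) (pair c d).
Proof.
  apply seqab_uniq.
  - rewrite pair_cmp, !seqab_at0. reflexivity.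
  - rewrite pair_cmp, !seqab_sh, pair_cmp. reflexivity.
Qed.

Lemma seqab_const {C : CatPN} {X A : Ob C} (x : Hom C X A) : seqab x x = cmp x pr1.
Proof.
  symmetry. apply seqab_uniq; norm; reflexivity.
Qed.

Lemma key {C : CatPN} {X A : Ob C} (M : Hom C (expN A) A) (x y : Hom C X A) :
  app2 (binop_of M) x y = Mapp M (seqab x y).
Proof.
  unfold app2, binop_of. rewrite Mapp_nat, seqab_nat, !pair_pr1, !pair_pr2. reflexivity.
Qed.

Lemma affine2 {C : CatPN} {A : Ob C} (M : Hom C (expN A) A) :
  is_supermidpoint M ->
  forall X (x y : Hom C (prod X nno) A),
    Mapp M (app2 (binop_of M) x y) = app2 (binop_of M) (Mapp M x) (Mapp M y).
Proof.
  intros [Hc [Hab [Hex Hd]]] X x y.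
  rewrite key, key, Hex. f_equal.
  apply seqab_uniq.
  - rewrite Mapp_nat. f_equal.
    transitivity (cmp (seqab x y) (pair (idm (prod X nno)) (cmp zero (bang (prod X nno))))).
    + unfold swapN. norm. reflexivity.
    + apply seqab_at0.
  - rewrite Mapp_nat, Mapp_nat. f_equal.
    transitivity (cmp (cmp (seqab x y) (pair pr1 (cmp succ pr2))) swapN).
    + unfold swapN. norm. reflexivity.
    + rewrite seqab_sh. unfold swapN. norm. reflexivity.
Qed.

Lemma assoc2 {C : CatPN} {A : Ob C} (M : Hom C (expN A) A) :
  is_supermidpoint M ->
  forall X (x : Hom C (prod X nno) A),
    Mapp M x = app2 (binop_of M) (at0 x) (Mapp M (shift x)).
Proof.
  intros [Hc [Hab [Hex Hd]]] X x. rewrite key. apply Hd.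
Qed.

Lemma st_shift {C : CatPN} {X : Ob C} (g : Hom C X X) :
  cmp (nrec (idm X) g) (pair (cmp g pr1) pr2) = cmp (nrec (idm X) g) (pair pr1 (cmp succ pr2)).
Proof.
  transitivity (nrec g g).
  - apply nrec_uniq.
    + transitivity (cmp (cmp (nrec (idm X) g) (pair (idm X) (cmp zero (bang X)))) g).
      * norm. reflexivity.
      * rewrite nrec_zero. norm. reflexivity.
    + transitivity (cmp (cmp (nrec (idm X) g) (pair pr1 (cmp succ pr2))) (pair (cmp g pr1) pr2)).
      * norm. reflexivity.
      * rewrite nrec_succ. norm. reflexivity.
  - symmetry. apply nrec_uniq.
    + transitivity (cmp (cmp (nrec (idm X) g) (pair pr1 (cmp succ pr2))) (pair (idm X) (cmp zero (bang X)))).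
      * norm. reflexivity.
      * rewrite nrec_succ, cmpA, nrec_zero. norm. reflexivity.
    + rewrite nrec_succ, cmpA, nrec_succ. reflexivity.
Qed.

Lemma part2 {C : CatPN} (A : Ob C) (M : Hom C (expN A) A) :
  is_supermidpoint M -> super_cancellative M -> mconvex_body (binop_of M).
Proof.
  intros HS Hcan.
  pose proof HS as [Hc [Hab [Hex Hd]]].
  set (m := binop_of M).
  assert (Hcomm : forall X (x y : Hom C X A), app2 m x y = app2 m y x).
  { intros. unfold m. rewrite !key. apply Hab. }
  split; [| split].
  - split; [| split].
    + intros X x. unfold m. rewrite key, seqab_const. apply Hc.
    + exact Hcomm.
    + intros X x y z w. unfold m.
      assert (Eq : seqab (app2 (binop_of M) x y) (app2 (binop_of M) z w)
                   = app2 (binop_of M) (seqab x z) (seqab y w)).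
      { unfold app2. rewrite seqab_pair, seqab_post. reflexivity. }
      rewrite (key M (app2 _ x y)), Eq.
      rewrite affine2 by exact HS. rewrite <- !key. reflexivity.
  - exact Hcan.
  - intros X c.
    set (g := cmp pr2 c). set (st := nrec (idm X) g).
    set (a := cmp (cmp pr1 c) st).
    exists (Mapp M a). split.
    + transitivity (app2 m (cmp pr1 c) (cmp (Mapp M a) g)).
      * unfold app2, g. norm. reflexivity.
      * transitivity (app2 m (at0 a) (Mapp M (shift a))); [ f_equal | symmetry; apply (assoc2 HS) ].
        -- unfold at0, a, st. rewrite cmpA, nrec_zero, cmp_idr. reflexivity.
        -- rewrite Mapp_nat. f_equal. unfold shift, a, st. rewrite !cmpA, st_shift. reflexivity.
    + intros v Hv.
      assert (Hy : cmp v st = app2 m a (shift (cmp v st))).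
      { transitivity (cmp (app2 m (cmp pr1 c) (cmp v g)) st).
        - f_equal. transitivity (cmp m (cmp (pair pr1 (cmp v pr2)) c)); [symmetry; exact Hv | unfold app2, g; norm; reflexivity].
        - unfold app2, shift, a, st. norm. rewrite <- cmpA, nrec_succ. norm. reflexivity. }
      assert (E0 := assoc2 HS _ (cmp v st)).
      assert (E : Mapp M (app2 m a (shift (cmp v st))) = app2 m (at0 (cmp v st)) (Mapp M (shift (cmp v st)))).
      { rewrite <- Hy. exact E0. } unfold m in E. rewrite affine2 in E by exact HS. fold m in E.
      rewrite (Hcomm _ (Mapp M a)), (Hcomm _ (at0 _)) in E.
      apply Hcan in E.
      rewrite E. unfold at0, st. rewrite cmpA, nrec_zero, cmp_idr. reflexivity.
Qed.

Definition unc {C : CatPN} {Z A : Ob C} (s : Hom C Z (expN A)) : Hom C (prod Z nno) A :=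
  cmp ev (pair (cmp s pr1) pr2).

Lemma iter_uniq {C : CatPN} {A : Ob C} (m : Hom C (prod A A) A) :
  iterative m -> forall X (c : Hom C X (prod A X)) (v w : Hom C X A),
  cmp m (cmp (pair pr1 (cmp v pr2)) c) = v ->
  cmp m (cmp (pair pr1 (cmp w pr2)) c) = w -> v = w.
Proof.
  intros Hit X c v w Hv Hw. destruct (Hit X c) as [u [_ Hu]].
  rewrite (Hu v Hv), (Hu w Hw). reflexivity.
Qed.

Lemma uniq_seq {C : CatPN} {A B : Ob C} (m : Hom C (prod A A) A) (Hit : iterative m)
  (F G g : forall X : Ob C, Hom C (prod X nno) B -> Hom C X A)
  (natF : forall X Y (f : Hom C Y X) s, cmp (F X s) f = F Y (cmp s (pair (cmp f pr1) pr2)))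
  (natG : forall X Y (f : Hom C Y X) s, cmp (G X s) f = G Y (cmp s (pair (cmp f pr1) pr2)))
  (recF : forall X s, F X s = app2 m (g X s) (F X (shift s)))
  (recG : forall X s, G X s = app2 m (g X s) (G X (shift s))) :
  forall X s, F X s = G X s.
Proof.
  assert (HY : F (expN B) ev = G (expN B) ev).
  { apply (iter_uniq Hit _ (pair (g _ ev) (lam (shift ev)))).
    - transitivity (app2 m (g _ ev) (cmp (F _ ev) (lam (shift ev)))).
      + unfold app2. norm. reflexivity.
      + rewrite natF, lam_beta. symmetry. apply recF.
    - transitivity (app2 m (g _ ev) (cmp (G _ ev) (lam (shift ev)))).
      + unfold app2. norm. reflexivity.
      + rewrite natG, lam_beta. symmetry. apply recG. }
  intros X s. rewrite <- (@lam_beta _ _ _ s), <- natF, <- natG, HY. reflexivity.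
Qed.

Lemma app2_nat {C : CatPN} {X Y A : Ob C} (m : Hom C (prod A A) A) (x y : Hom C X A) (f : Hom C Y X) :
  cmp (app2 m x y) f = app2 m (cmp x f) (cmp y f).
Proof. unfold app2. rewrite cmpA, pair_cmp. reflexivity. Qed.

Lemma part1 {C : CatPN} (A : Ob C) (m : Hom C (prod A A) A) :
  is_midpoint m -> iterative m ->
  (exists M : Hom C (expN A) A, assoc_infop m M
     /\ forall M' : Hom C (expN A) A, assoc_infop m M' -> M' = M) /\
  (forall M : Hom C (expN A) A, assoc_infop m M ->
     is_supermidpoint M /\ (mcancellative m -> super_cancellative M)).
Proof.
  intros [Hi [Hcomm Hmed]] Hit. split.
  - set (c := pair (at0 (@ev C A)) (lam (shift (@ev C A)))).
    destruct (Hit _ c) as [u [Hu Huniq]].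
    exists u. split.
    + intros X x. unfold Mapp. rewrite <- Hu at 1.
      transitivity (app2 m (cmp (at0 ev) (lam x)) (cmp u (cmp (lam (shift ev)) (lam x)))).
      * unfold app2, c. norm. reflexivity.
      * f_equal.
        -- transitivity (at0 (cmp ev (pair (cmp (lam x) pr1) pr2))).
           ++ unfold at0. norm. reflexivity.
           ++ rewrite lam_beta. reflexivity.
        -- f_equal. rewrite lam_nat. f_equal.
           transitivity (shift (cmp ev (pair (cmp (lam x) pr1) pr2))).
           ++ unfold shift. norm. reflexivity.
           ++ rewrite lam_beta. reflexivity.
    + intros M' HM'. apply Huniq.
      assert (E := HM' _ (@ev C A)). unfold Mapp in E.
      assert (L : lam (@ev C A) = idm (expN A)).
      { symmetry. apply lam_uniq. norm. reflexivity. }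
      rewrite L, cmp_idr in E. rewrite E at 2. unfold app2, c. norm. reflexivity.
  - intros M HM.
    assert (Hconst : forall X (x : Hom C X A), Mapp M (cmp x pr1) = x).
    { intros X x. apply (iter_uniq Hit _ (pair x (idm X))).
      - transitivity (app2 m (at0 (cmp x pr1)) (Mapp M (shift (cmp x pr1)))).
        + unfold app2, at0, shift. norm. reflexivity.
        + symmetry. apply HM.
      - norm. apply Hi. }
    assert (Hseq : forall X (x y : Hom C X A), Mapp M (seqab x y) = app2 m x y).
    { intros X x y. rewrite HM. unfold at0, shift. rewrite seqab_at0, seqab_sh, Hconst. reflexivity. }
    assert (Haff : forall X (y z : Hom C (prod X nno) A),
               Mapp M (app2 m y z) = app2 m (Mapp M y) (Mapp M z)).
    { intros X y z.
      assert (E := uniq_seq Hit (B := prod A A)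
        (fun X s => Mapp M (cmp m s))
        (fun X s => app2 m (Mapp M (cmp pr1 s)) (Mapp M (cmp pr2 s)))
        (fun X s => cmp m (at0 s))).
      simpl in E. transitivity (Mapp M (cmp m (pair y z))); [reflexivity|]. rewrite E.
      - rewrite !pair_pr1, !pair_pr2. reflexivity.
      - intros. rewrite Mapp_nat, cmpA. reflexivity.
      - intros. rewrite app2_nat, !Mapp_nat, !cmpA. reflexivity.
      - intros. rewrite HM. unfold at0, shift. rewrite !cmpA. reflexivity.
      - intros X0 s. rewrite (HM _ (cmp pr1 s)), (HM _ (cmp pr2 s)), Hmed.
        unfold at0, shift. rewrite !cmpA. f_equal. unfold app2. rewrite <- !cmpA, <- pair_cmp, pair_proj, cmpA. reflexivity. }
    split; [split; [| split; [| split]] |].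
    + exact Hconst.
    + intros X x y. rewrite !Hseq. apply Hcomm.
    + intros X x.
      assert (E := uniq_seq Hit (B := expN A)
        (fun X s => Mapp M (cmp M s))
        (fun X s => Mapp M (Mapp M (cmp (unc s) swapN)))
        (fun X s => cmp M (at0 s))).
      simpl in E. rewrite <- (@lam_beta _ _ _ x) at 2. unfold unc in E. rewrite <- E.
      * reflexivity.
      * intros. rewrite Mapp_nat, cmpA. reflexivity.
      * intros. rewrite !Mapp_nat. f_equal. f_equal. unfold swapN. norm. reflexivity.
      * intros. rewrite HM. unfold at0, shift. rewrite !cmpA. reflexivity.
      * intros X0 s. rewrite (HM _ (cmp (cmp ev (pair (cmp s pr1) pr2)) swapN)), Haff.
        f_equal.
        -- transitivity (Mapp M (unc (at0 s))).
           ++ f_equal. unfold unc, at0, swapN. norm. reflexivity.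
           ++ unfold Mapp, unc. rewrite lam_ev. reflexivity.
        -- f_equal. f_equal. unfold unc, shift, swapN. norm. reflexivity.
    + intros X x. rewrite Hseq. apply HM.
    + intros Hcan X x y z. rewrite !key, !Hseq. apply Hcan.
Qed.

Theorem mainTheorem2 (C : CatPN) :
  (forall (A : Ob C) (m : Hom C (prod A A) A),
     is_midpoint m -> iterative m ->
     (exists M : Hom C (expN A) A, assoc_infop m M
        /\ forall M' : Hom C (expN A) A, assoc_infop m M' -> M' = M) /\
     (forall M : Hom C (expN A) A, assoc_infop m M ->
        is_supermidpoint M /\ (mcancellative m -> super_cancellative M))) /\
  (forall (A : Ob C) (M : Hom C (expN A) A),
     is_supermidpoint M -> super_cancellative M -> mconvex_body (binop_of M)).
Proof.
  split.
  - intros A m. apply part1.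
  - intros A M. apply part2.
Qed.
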